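(* For every $k\ge0$, with $l=2^k$, $$f^{(2l-1)}(x,z)=x^{l}+\sum_{j=0}^{k}x^{\,l-2^j}z^{2^j}.$$
   Context: $\mathbb{F}=\mathrm{GF}(2)$, $R=\mathbb{F}[x,z]$, $|\cdot|$ is total degree. Let $(r_0,r_1,\ldots)$ be the binary sequence with $r_i=1$ if $i=2^j-1$ for some $j\ge 0$ and $r_i=0$ otherwise. For $n\ge1$ its inverse form is $R^{(1-n)}=\sum_{j=1-n}^{0}r_{-j}\,x^{j}z^{1-n-j}\in\mathbb{F}[x^{-1},z^{-1}]$. For a form $f\in R$ and such a form $G$, $\Delta(f;G)$ is the coefficient of $x^{|f|+|G|}z^0$ in $f\cdot G$ computed in $\mathbb{F}[x^{\pm1},z^{\pm1}]$ if $|f|+|G|\le 0$, and $0$ otherwise. Define forms recursively: $(f^{(0)},g^{(0)})=(x+z,z)$; for $k\ge0$ let $d_k=|g^{(k)}|-|f^{(k)}|$ and $\Delta_k=\Delta(f^{(k)};R^{(-1-k)})$, and set $(f^{(k+1)},g^{(k+1)})=(f^{(k)},zg^{(k)})$ if $\Delta_k=0$; $=(f^{(k)}+x^{-d_k}g^{(k)},\,zg^{(k)})$ if $\Delta_k=1$ and $d_k\le0$; $=(x^{d_k}f^{(k)}+g^{(k)},\,zf^{(k)})$ if $\Delta_k=1$ and $d_k>0$. *)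

(* Defs.v *)
From HB Require Import structures.
From mathcomp Require Import all_boot all_order all_algebra.
From mathcomp Require Import mpoly.
Set Implicit Arguments. Unset Strict Implicit. Unset Printing Implicit Defensive.
Import GRing.Theory.
Local Open Scope ring_scope.

Definition R := {mpoly 'F_2[2]}.
Definition xv : R := 'X_(ord0 : 'I_2).
Definition zv : R := 'X_(ord_max : 'I_2).

Definition mon2 (a b : nat) : 'X_{1..2} := [multinom [tuple a; b]].

(* total degree |f| (msize = 1 + total degree; the forms here are nonzero) *)
Definition tdeg (f : R) : nat := (msize f).-1.

(* r_i = 1 iff i = 2^j - 1 for some j >= 0  (necessarily j <= i) *)
Definition rseq (i : nat) : bool := [exists j : 'I_i.+2, (i.+1 == 2 ^ j)%N].

(* Delta(f; R^(1-n)): coefficient of x^(|f|+|G|) z^0 in f * G, where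
   G = R^(1-n) = sum_{j=1-n}^{0} r_{-j} x^j z^(1-n-j), |G| = 1-n.
   Written out: a monomial x^a z^b of f contributes with j = b+1-n, which
   requires a + b = |f| and 0 <= b <= n-1, and weight r_{-j} = r_{n-1-b}.
   Hence, if |f| + (1-n) <= 0 (i.e. |f| <= n-1), the coefficient is
   sum_{b=0}^{|f|} f_{x^(|f|-b) z^b} * r_{n-1-b}; otherwise Delta = 0. *)
Definition Delta (f : R) (n : nat) : 'F_2 :=
  if (tdeg f <= n.-1)%N then
    \sum_(b < (tdeg f).+1) f@_(mon2 (tdeg f - b) b) * (rseq (n.-1 - b))%:R
  else 0.

(* one step of the recursion, at index k, using Delta(f^(k); R^(-1-k)),
   i.e. n = k+2; d_k = |g| - |f| (an integer). *)
Definition step (k : nat) (fg : R * R) : R * R :=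
  let: (f, g) := fg in
  if Delta f k.+2 == 0 then (f, zv * g)
  else if (tdeg g <= tdeg f)%N           (* d_k <= 0: x^(-d_k) = x^(|f|-|g|) *)
       then (f + xv ^+ (tdeg f - tdeg g) * g, zv * g)
       else (xv ^+ (tdeg g - tdeg f) * f + g, zv * f).

Fixpoint fgseq (k : nat) : R * R :=
  match k with
  | 0 => (xv + zv, zv)
  | k'.+1 => step k' (fgseq k')
  end.

Definition fseq (k : nat) : R := (fgseq k).1.
Definition gseq (k : nat) : R := (fgseq k).2.

(* Main.v *)
Set Warnings "-all".
Require Import Defs.
From HB Require Import structures.
From mathcomp Require Import all_boot all_order all_algebra.
From mathcomp Require Import mpoly.
From mathcomp Require Import ring zify.
Local Open Scope ring_scope.
Import GRing.Theory.

Notation P2 := {poly 'F_2}.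

Lemma two0 : (2%:R : P2) = 0.
Proof. by rewrite -polyC_natr; apply/eqP; rewrite polyC_eq0. Qed.

Lemma addxx (a : P2) : a + a = 0.
Proof. by rewrite -mulr2n -mulr_natr two0 mulr0. Qed.

Lemma sqrD2 (a b : P2) : (a + b) ^+ 2 = a ^+ 2 + b ^+ 2.
Proof.
have -> : (a + b) ^+ 2 = a ^+ 2 + b ^+ 2 + (a * b + a * b) by ring.
by rewrite addxx addr0.
Qed.

Lemma sqr_sum (T : nat) (f : nat -> P2) :
  (\sum_(j < T) f j) ^+ 2 = \sum_(j < T) f j ^+ 2.
Proof.
elim: T => [|T IH]; first by rewrite !big_ord0 expr0n.
by rewrite !big_ord_recr /= sqrD2 IH.
Qed.

Fixpoint A (n : nat) : P2 :=
  match n with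
  | 0 => 1
  | 1 => 1 + 'X
  | (m.+1 as k).+1 => A k + 'X^2 * A m
  end.

Fixpoint B (n : nat) : P2 :=
  match n with
  | 0 => 0
  | 1 => 'X
  | (m.+1 as k).+1 => B k + 'X^2 * B m
  end.

Fixpoint U (n : nat) : P2 :=
  match n with
  | 0 => 0
  | 1 => 1
  | (m.+1 as k).+1 => U k + 'X^2 * U m
  end.

Lemma A_rec n : A n.+2 = A n.+1 + 'X^2 * A n. Proof. by []. Qed.
Lemma B_rec n : B n.+2 = B n.+1 + 'X^2 * B n. Proof. by []. Qed.
Lemma U_rec n : U n.+2 = U n.+1 + 'X^2 * U n. Proof. by []. Qed.

Lemma two_ind (P : nat -> Prop) : P 0 -> P 1 -> (forall n, P n -> P n.+1 -> P n.+2) ->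
  forall n, P n.
Proof.
move=> H0 H1 HS n; suff: P n /\ P n.+1 by case.
elim: n => [|n [IH1 IH2]]; first by split.
by split => //; apply: HS.
Qed.

Lemma Bil n : A n.+1 * B n + A n * B n.+1 = 'X^((2 * n).+1).
Proof.
elim: n => [|n IH]; first by rewrite /= mulr0 add0r mul1r muln0 expr1.
rewrite A_rec B_rec.
have -> : (A n.+1 + 'X^2 * A n) * B n.+1 + A n.+1 * (B n.+1 + 'X^2 * B n)
   = 'X^2 * (A n.+1 * B n + A n * B n.+1) + (A n.+1 * B n.+1 + A n.+1 * B n.+1) by ring.
by rewrite addxx addr0 IH -exprD mulnS.
Qed.

Lemma Nrm n : 'X * A n ^+ 2 + A n * B n + B n ^+ 2 = 'X^((2 * n).+1).
Proof.
suff: ('X * A n ^+ 2 + A n * B n + B n ^+ 2 = 'X^((2 * n).+1)) /\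
      ('X * A n.+1 ^+ 2 + A n.+1 * B n.+1 + B n.+1 ^+ 2 = 'X^((2 * n.+1).+1)) by case.
elim: n => [|n [IH1 IH2]].
  split; first by rewrite /= muln0 expr1; ring.
  have -> : 'X * A 1 ^+ 2 + A 1 * B 1 + B 1 ^+ 2 = 'X^3 + ('X + 'X) + ('X^2 + 'X^2) + ('X^2 + 'X^2)
    by rewrite [A 1]/= [B 1]/=; ring.
  by rewrite !addxx !addr0.
split => //.
rewrite A_rec B_rec.
set a1 := A n.+1; set a0 := A n; set b1 := B n.+1; set b0 := B n.
have -> : 'X * (a1 + 'X^2 * a0) ^+ 2 + (a1 + 'X^2 * a0) * (b1 + 'X^2 * b0) +
   (b1 + 'X^2 * b0) ^+ 2 =
   ('X * a1 ^+ 2 + a1 * b1 + b1 ^+ 2) + 'X^4 * ('X * a0 ^+ 2 + a0 * b0 + b0 ^+ 2)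
   + 'X^2 * (a1 * b0 + a0 * b1) + ('X^3 * a1 * a0 + b1 * 'X^2 * b0 + ('X^3 * a1 * a0 + b1 * 'X^2 * b0)) by ring.
rewrite addxx addr0 IH2 IH1 Bil -!exprD.
have -> : (4 + (2 * n).+1 = (2 * n.+2).+1)%N by rewrite !mulnS; lia.
have -> : (2 + (2 * n).+1 = (2 * n.+1).+1)%N by rewrite !mulnS; lia.
by rewrite addrAC addxx add0r.
Qed.

Lemma oppr2 (a : P2) : - a = a.
Proof. by apply/eqP; rewrite eq_sym -subr_eq0 opprK addxx. Qed.

Lemma U_add m n : U (m + n).+1 = U m.+1 * U n.+1 + 'X^2 * U m * U n.
Proof.
elim/two_ind: m.
- by rewrite /= mulr0 mul0r addr0 mul1r.
- by rewrite add1n U_rec /= mulr0 addr0 mulr1 mul1r.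
move=> m IH0 IH1.
rewrite !addSn U_rec -addSn IH1 IH0 (U_rec m.+1) (U_rec m); ring.
Qed.

Lemma U_dbl n : U (2 * n) = U n ^+ 2.
Proof.
case: n => [|n]; first by rewrite /= expr0n.
have -> : (2 * n.+1 = (n + n.+1).+1)%N by lia.
rewrite U_add U_rec.
have -> : U n.+1 * (U n.+1 + 'X^2 * U n) + 'X^2 * U n * U n.+1 =
  U n.+1 ^+ 2 + ('X^2 * U n * U n.+1 + 'X^2 * U n * U n.+1) by ring.
by rewrite addxx addr0.
Qed.

Lemma U_dbl1 n : U (2 * n).+1 = U n.+1 ^+ 2 + 'X^2 * U n ^+ 2.
Proof. by rewrite mul2n -addnn U_add; ring. Qed.

Lemma A_U n : A n = U n.+1 + 'X * U n.
Proof.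
elim/two_ind: n.
- by rewrite /= mulr0 addr0.
- by rewrite /= mulr0 addr0 mulr1.
move=> n IH0 IH1; rewrite A_rec IH0 IH1 (U_rec n.+1) (U_rec n); ring.
Qed.

Lemma U_pow k : U (2 ^ k) = 1.
Proof.
elim: k => [|k IH]; first by [].
by rewrite expnS U_dbl IH expr1n.
Qed.

Lemma A_pow k : A (2 ^ k) = 1 + \sum_(j < k.+1) 'X^(2 ^ j).
Proof.
elim: k => [|k IH].
  by rewrite big_ord1 /= expr1.
rewrite A_U expnS U_dbl1 U_dbl U_pow expr1n mulr1 mulr1.
have HU : U (2 ^ k).+1 = 1 + \sum_(j < k.+1) 'X^(2 ^ j) + 'X.
  by rewrite -IH A_U U_pow mulr1 -addrA addxx addr0.
have hS : \sum_(j < k.+2) 'X^(2 ^ j) = 'X + (\sum_(j < k.+1) 'X^(2 ^ j)) ^+ 2 :> P2.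
  rewrite (sqr_sum _ (fun j => 'X^(2 ^ j))) big_ord_recl expn0 expr1; congr (_ + _).
  by apply: eq_bigr => j _; rewrite /bump /= expnS -exprM mulnC.
rewrite HU hS !sqrD2 expr1n.
set S := \sum_(i < k.+1) _.
have -> : 1 + S ^+ 2 + 'X^2 + 'X^2 + 'X = 1 + ('X + S ^+ 2) + ('X^2 + 'X^2) by ring.
by rewrite addxx addr0.
Qed.

Lemma size_A n : (size (A n) <= n.+1)%N.
Proof.
elim/two_ind: n; first by rewrite /= size_poly1.
  by rewrite /= addrC size_XaddC.
move=> n IH0 IH1; rewrite A_rec.
apply: leq_trans (size_polyD _ _) _; rewrite geq_max; apply/andP; split.
  by apply: leq_trans IH1 _.
apply: leq_trans (size_polyMleq _ _) _; rewrite size_polyXn; lia.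
Qed.

Lemma size_B n : (size (B n) <= 2 * n)%N.
Proof.
elim/two_ind: n; first by rewrite /= size_poly0.
  by rewrite /= size_polyX.
move=> n IH0 IH1; rewrite B_rec.
apply: leq_trans (size_polyD _ _) _; rewrite geq_max; apply/andP; split.
  by apply: leq_trans IH1 _; lia.
apply: leq_trans (size_polyMleq _ _) _; rewrite size_polyXn; lia.
Qed.

Lemma A0 n : (A n)`_0 = 1.
Proof.
elim/two_ind: n; first by rewrite coef1.
  by rewrite /= coefD coef1 coefX addr0.
by move=> n _ IH1; rewrite A_rec coefD coefXnM IH1 /= addr0.
Qed.

Lemma B0 n : (B n)`_0 = 0.
Proof.
elim/two_ind: n; first by rewrite coef0.
  by rewrite /= coefX.
by move=> n _ IH1; rewrite B_rec coefD coefXnM IH1 /= addr0.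
Qed.

Definition s (T : nat) : P2 := \sum_(j < T) 'X^(2 ^ j).

Lemma s_id T : s T ^+ 2 + s T + 'X = 'X^(2 ^ T).
Proof.
elim: T => [|T IH].
  by rewrite /s big_ord0 expr0n !add0r expn0 expr1.
rewrite /s big_ord_recr /= -/(s T) sqrD2.
have -> : s T ^+ 2 + 'X^(2 ^ T) ^+ 2 + (s T + 'X^(2 ^ T)) + 'X =
  (s T ^+ 2 + s T + 'X) + 'X^(2 ^ T) + 'X^(2 ^ T) ^+ 2 by ring.
by rewrite IH addxx add0r -exprM expnS mulnC.
Qed.

Lemma E_id n T : (A n * s T + B n) * (A n * s T + B n + A n) =
  'X^((2 * n).+1) + 'X^(2 ^ T) * A n ^+ 2.
Proof.
set a := A n; set b := B n; set t := s T.
have -> : (a * t + b) * (a * t + b + a) =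
  ('X * a ^+ 2 + a * b + b ^+ 2) + a ^+ 2 * (t ^+ 2 + t + 'X) +
  ((a * b * t - 'X * a ^+ 2) + (a * b * t - 'X * a ^+ 2)) by ring.
by rewrite addxx addr0 Nrm s_id mulrC.
Qed.

Lemma coefM_low (E F : P2) i : F`_0 = 1 -> (forall j, (j < i)%N -> E`_j = 0) ->
  (E * F)`_i = E`_i.
Proof.
move=> F0 H; rewrite coefM big_ord_recr /= subnn F0 mulr1 big1 ?add0r //.
by move=> j _; rewrite H ?mul0r.
Qed.

Lemma low_coef (E F G : P2) (k M : nat) : F`_0 = 1 -> (k < M)%N ->
  E * F = 'X^k + 'X^M * G -> (forall i, (i < k)%N -> E`_i = 0) /\ E`_k = 1.
Proof.
move=> F0 kM EF.
have Hc : forall i, (i < M)%N -> (E * F)`_i = (i == k)%:R.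
  by move=> i iM; rewrite EF coefD coefXn coefXnM iM addr0.
have Hz : forall i, (i < k)%N -> E`_i = 0.
  elim/ltn_ind => i IH ik.
  rewrite -(coefM_low E F i F0); last by move=> j ji; apply: IH => //; apply: ltn_trans ik.
  by rewrite Hc ?(ltn_trans ik) // (ltn_eqF ik).
split => //.
by rewrite -(coefM_low E F k F0 Hz) Hc // eqxx.
Qed.

Lemma s_coef0 T : (s T)`_0 = 0.
Proof.
rewrite /s coef_sum big1 // => j _; rewrite coefXn; case: eqP => // h; by have := expn_gt0 2 j; rewrite -h.
Qed.

Lemma s_coef T i : (0 < i)%N -> (i < T)%N -> (s T)`_i = (rseq i.-1)%:R.
Proof.
move=> i0 iT; rewrite /s coef_sum /rseq prednK //.
case: existsP => [[j Hij]|nex].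
  have jT : (j < T)%N.
    have := ltn_expl j (ltnSn 1); rewrite -(eqP Hij) => ji; exact: ltn_trans iT.
  rewrite (bigD1 (Ordinal jT)) //= coefXn Hij big1 ?addr0 // => l.
  rewrite coefXn -val_eqE /= => /negbTE lj; rewrite (eqP Hij) eqn_exp2l // eq_sym lj //.
rewrite big1 // => l _; rewrite coefXn; case: eqP => // il.
exfalso; apply: nex.
have lT : (l < i.+1)%N by rewrite il; apply/ltnW/ltn_expl.
by exists (Ordinal lT); rewrite /= il.
Qed.

Lemma As_coef (p : P2) n N T : (size p <= n.+1)%N -> (n < N)%N -> (N < T)%N ->
  (p * s T)`_N = \sum_(b < n.+1) p`_b * (rseq (N.-1 - b))%:R.
Proof.
move=> sp nN NT; rewrite coefM.
rewrite (big_ord_widen N.+1 (fun b => p`_b * (rseq (N.-1 - b))%:R)); last by lia.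
rewrite [RHS]big_mkcond /=; apply: eq_bigr => b _.
case: ifP => bn.
  rewrite s_coef; [congr (_ * (rseq _)%:R); lia | lia | lia].
by rewrite nth_default ?mul0r //; apply: leq_trans sp _; lia.
Qed.

Lemma key_coefs n : (0 < n)%N ->
  (A n * s (2 * n).+2)`_(2 * n) = 0 /\ (A n * s (2 * n).+2)`_((2 * n).+1) = 1.
Proof.
move=> n0.
set T := (2 * n).+2.
have TM : ((2 * n).+1 < 2 ^ T)%N.
  by apply: ltn_trans (ltn_expl _ _) => //.
have F0 : (A n * s T + B n + A n)`_0 = 1.
  by rewrite !coefD coefM big_ord1 s_coef0 mulr0 add0r B0 add0r A0.
have [Hz H1] := low_coef _ _ _ _ _ F0 TM (E_id n T).
have HB : forall i, (2 * n <= i)%N -> (B n)`_i = 0.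
  by move=> i ih; rewrite nth_default //; apply: leq_trans (size_B n) ih.
split.
  by have := Hz (2 * n) (ltnSn _); rewrite coefD HB // addr0.
by move: H1; rewrite coefD HB ?addr0 //.
Qed.

Lemma mon2E a b (i : 'I_2) : mon2 a b i = if i == ord0 then a else b.
Proof. by case: i => [[|[|i]] Hi] //=; rewrite mnm_tnth. Qed.

Lemma mon2_inj a b a' b' : mon2 a b = mon2 a' b' -> a = a' /\ b = b'.
Proof.
move=> e; split.
  by have := congr1 (fun m : 'X_{1..2} => m ord0) e; rewrite !mon2E.
by have := congr1 (fun m : 'X_{1..2} => m ord_max) e; rewrite !mon2E.
Qed.

Lemma mdeg_mon2 a b : mdeg (mon2 a b) = (a + b)%N.
Proof. by rewrite mdegE big_ord_recl big_ord1 !mon2E. Qed.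

Lemma X_mon2 a b : xv ^+ a * zv ^+ b = 'X_[mon2 a b].
Proof.
rewrite /xv /zv !mpolyXn -mpolyXD; congr 'X_[_]; apply/mnmP => i.
rewrite mnmDE !mulmnE !mnm1E mon2E.
by case: i => [[|[|i]] Hi] //; rewrite -!val_eqE /= ?mul1n ?mul0n ?addn0.
Qed.

Lemma xv_mon2 a b : xv * 'X_[mon2 a b] = 'X_[mon2 a.+1 b].
Proof. by rewrite -!X_mon2 mulrA -exprS. Qed.

Lemma zv_mon2 a b : zv * 'X_[mon2 a b] = 'X_[mon2 a b.+1].
Proof. by rewrite -!X_mon2 mulrCA -exprS. Qed.

Definition H (d : nat) (p : P2) : R := \sum_(b < d.+1) p`_b *: 'X_[mon2 (d - b) b].

Lemma H_add d (p q : P2) : H d (p + q) = H d p + H d q.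
Proof. by rewrite /H -big_split; apply: eq_bigr => b _; rewrite coefD scalerDl. Qed.

Lemma H_coef d (p : P2) b : (b <= d)%N -> (H d p)@_(mon2 (d - b) b) = p`_b.
Proof.
move=> bd; rewrite /H raddf_sum /= (bigD1 (Ordinal (bd : b < d.+1)%N)) //=.
rewrite mcoeffZ mcoeffX eqxx mulr1 big1 ?addr0 // => c /negbTE cb.
rewrite mcoeffZ mcoeffX; case: eqP => [/mon2_inj [_ e]|]; last by rewrite mulr0.
by move: cb; rewrite -val_eqE /= e eqxx.
Qed.

Lemma H_X d (p : P2) : (size p <= d.+1)%N -> xv * H d p = H d.+1 p.
Proof.
move=> sp; rewrite /H mulr_sumr [RHS]big_ord_recr /= nth_default // scale0r addr0.
apply: eq_bigr => b _; rewrite -scalerAr xv_mon2 subSn //; exact: (ltn_ord b).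
Qed.

Lemma H_Z d (p : P2) : zv * H d p = H d.+1 ('X * p).
Proof.
rewrite /H mulr_sumr [RHS]big_ord_recl /= coefXM eqxx scale0r add0r.
by apply: eq_bigr => b _; rewrite -scalerAr zv_mon2 coefXM /= /bump /= add1n subSS.
Qed.

Lemma H_Xn d c : (c <= d)%N -> H d ('X^c) = 'X_[mon2 (d - c) c].
Proof.
move=> cd; rewrite /H (bigD1 (Ordinal (cd : c < d.+1)%N)) //= coefXn eqxx scale1r.
rewrite big1 ?addr0 // => b /negbTE bc; rewrite coefXn.
by move: bc; rewrite -val_eqE /= => ->; rewrite scale0r.
Qed.

Lemma H_sum d k (f : nat -> P2) : H d (\sum_(j < k) f j) = \sum_(j < k) H d (f j).
Proof.
elim: k => [|k IH].
  by rewrite !big_ord0 /H big1 // => b _; rewrite coef0 scale0r.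
by rewrite !big_ord_recr /= H_add IH.
Qed.

Lemma H_size d (p : P2) : p != 0 -> (size p <= d.+1)%N -> tdeg (H d p) = d.
Proof.
move=> p0 sp.
set b0 := (size p).-1.
have b0d : (b0 <= d)%N by rewrite /b0; lia.
have : mon2 (d - b0) b0 \in msupp (H d p).
  by rewrite mcoeff_msupp H_coef // -lead_coefE lead_coef_eq0.
move/msize_mdeg_lt; rewrite mdeg_mon2 subnK // => h.
have hup : (msize (H d p) <= d.+1)%N.
  apply: leq_trans (msize_sum _ _ _) _.
  apply/bigmax_leqP => b _; apply: leq_trans (msizeZ_le _ _) _.
  by rewrite msizeX mdeg_mon2 subnK // -ltnS.
rewrite /tdeg; lia.
Qed.

Lemma sizeXM (q : P2) : (size ('X * q)%R <= (size q).+1)%N.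
Proof. by apply: leq_trans (size_polyMleq _ _) _; rewrite size_polyX. Qed.

Definition Fm m := H m.+1 (A m.+1).
Definition Gm m := H m.+1 ('X * A m).

Lemma A_neq0 n : A n != 0.
Proof. by apply/eqP => h; have := A0 n; rewrite h coef0. Qed.

Lemma tdeg_Fm m : tdeg (Fm m) = m.+1.
Proof. exact: H_size (A_neq0 _) (size_A _). Qed.

Lemma Delta_Fm m N : (m.+1 < N)%N -> (N < (2 * m.+1).+2)%N ->
  Delta (Fm m) N = (A m.+1 * s (2 * m.+1).+2)`_N.
Proof.
move=> h1 h2; rewrite /Delta tdeg_Fm.
have -> : (m.+1 <= N.-1)%N by lia.
rewrite (@As_coef _ _ _ _ (size_A m.+1) h1 h2).
by apply: eq_bigr => b _; rewrite H_coef // -ltnS.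
Qed.

Lemma fg_even m : fgseq (2 * m) = (Fm m, Gm m).
Proof.
elim: m => [|m IH].
  have e1 : H 1 1 = xv by rewrite -(expr0 ('X : P2)) H_Xn // -X_mon2 expr1 expr0 mulr1.
  have e2 : H 1 'X = zv by rewrite -(expr1 ('X : P2)) H_Xn // -X_mon2 expr0 expr1 mul1r.
  by rewrite /Fm /Gm /= H_add mulr1 e1 e2.
have -> : (2 * m.+1 = (2 * m).+2)%N by lia.
rewrite /= IH /step.
have [D0 D1] := @key_coefs _ (ltn0Sn m).
rewrite Delta_Fm; [| | ]. 2: lia. 2: lia.
have -> : (2 * m).+2 = (2 * m.+1)%N by lia.
rewrite D0 eqxx /= Delta_Fm; [| lia | lia].
rewrite D1 /= tdeg_Fm /Gm H_Z H_size; first last.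
- have := size_A m; have := sizeXM ('X * A m); have := sizeXM (A m); lia.
- by rewrite !mulf_eq0 polyX_eq0 (negbTE (A_neq0 _)).
rewrite ltnn subSnn expr1 /Fm /Gm !H_Z H_X ?size_A // -H_add.
by rewrite mulrA -expr2 -A_rec.
Qed.


Theorem mainTheorem13 (k : nat) :
  fseq (2 * 2 ^ k - 1) =
    xv ^+ (2 ^ k) + \sum_(j < k.+1) xv ^+ (2 ^ k - 2 ^ j) * zv ^+ (2 ^ j).
Proof.
have k0 : (0 < 2 ^ k)%N by rewrite expn_gt0.
have -> : (2 * 2 ^ k - 1 = (2 * (2 ^ k).-1).+1)%N by lia.
rewrite /fseq /= fg_even /step.
have [D0 _] := @key_coefs _ (ltn0Sn (2 ^ k).-1).
rewrite Delta_Fm; [| lia | lia].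
have -> : (2 * (2 ^ k).-1).+2 = (2 * (2 ^ k).-1.+1)%N by lia.
rewrite D0 eqxx /= /Fm prednK // A_pow H_add (H_sum _ _ (fun j => 'X^(2 ^ j))).
rewrite -(expr0 ('X : P2)) H_Xn // subn0.
rewrite -[xv ^+ _]mulr1 -(expr0 zv) X_mon2; congr (_ + _).
apply: eq_bigr => j _; rewrite H_Xn ?X_mon2 //.
by apply: leq_pexp2l => //; rewrite -ltnS.
Qed.
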